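(* Let $\boldsymbol\xi=(\xi_1,\dots,\xi_n)$ be the indicator vector of the output of binary-tree pivotal sampling on a fixed full binary tree with leaves $[n]$ and leaf probabilities with integer sum. For every $\mathcal S\subseteq[n]$ with $\Pr[\xi_l=1\ \forall l\in\mathcal S]>0$ and all distinct $i,j\in[n]\setminus\mathcal S$, $$\Pr[\xi_i=1\mid \xi_l=1\ \forall l\in\mathcal S]\;\Pr[\xi_j=1\mid \xi_l=1\ \forall l\in\mathcal S]\;\ge\;\Pr[\xi_i=1,\ \xi_j=1\mid \xi_l=1\ \forall l\in\mathcal S].$$
   Context: Binary-tree pivotal sampling: let $T$ be a full binary tree whose leaves are identified with an index set, and let $q_i\in[0,1]$ be leaf probabilities with integer sum. Each node can store an index together with a current probability; initially each leaf $i$ stores $i$ with probability $q_i$, and the output set $\mathcal S_{\rm out}$ is empty. Repeatedly choose two sibling nodes that both store indices, say $i$ with probability $q_i$ and $j$ with probability $q_j$, with parent $P$, and remove them. If $q_i+q_j\le1$: with probability $q_i/(q_i+q_j)$ store $i$ at $P$ with probability $q_i+q_j$ ($j$ is rejected), otherwise store $j$ at $P$ with probability $q_i+q_j$ ($i$ is rejected). If $q_i+q_j>1$: with probability $(1-q_i)/(2-q_i-q_j)$ put $j$ into $\mathcal S_{\rm out}$ and store $i$ at $P$ with probability $q_i+q_j-1$; otherwise put $i$ into $\mathcal S_{\rm out}$ and store $j$ at $P$ with probability $q_i+q_j-1$. When only the root stores an index, put it into $\mathcal S_{\rm out}$ iff its probability is $1$. *)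

(* Defs.v *)
From HB Require Import structures.
From mathcomp Require Import all_boot all_order all_algebra.
Set Implicit Arguments. Unset Strict Implicit. Unset Printing Implicit Defensive.
Import Order.TTheory GRing.Theory Num.Theory.
Local Open Scope ring_scope.

Inductive btree (n : nat) : Type :=
  | BLeaf of 'I_n
  | BNode of btree n & btree n.

Fixpoint leaves n (t : btree n) : seq 'I_n :=
  match t with
  | BLeaf i => [:: i]
  | BNode l r => leaves l ++ leaves r
  end.

Definition leaves_are_index_set n (t : btree n) : Prop :=
  perm_eq (leaves t) (enum 'I_n).

Section Pivotal.
Variables (R : realFieldType) (n : nat) (q : 'I_n -> R).

Definition dist (A : Type) := seq (R * A).

(* state of a node: stored index, its current probability, and the
   elements put into S_out within the subtree *)
Definition nstate := ('I_n * R * {set 'I_n})%type.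

Definition merge (a b : nstate) : dist nstate :=
  let: (i, qi, S1) := a in
  let: (j, qj, S2) := b in
  let s := qi + qj in
  let Su := S1 :|: S2 in
  if s <= 1 then
    [:: (qi / s, (i, s, Su)); (1 - qi / s, (j, s, Su))]
  else
    let p := (1 - qi) / (2 - qi - qj) in
    [:: (p, (i, s - 1, j |: Su)); (1 - p, (j, s - 1, i |: Su))].

Fixpoint run (t : btree n) : dist nstate :=
  match t with
  | BLeaf i => [:: (1, (i, q i, set0))]
  | BNode l r =>
      flatten [seq flatten [seq [seq (x.1 * y.1 * z.1, z.2) | z <- merge x.2 y.2]
                           | y <- run r] | x <- run l]
  end.

Definition pivotal_output (t : btree n) : dist {set 'I_n} :=
  [seq (x.1, let: (i, p, So) := x.2 in if p == 1 then i |: So else So) | x <- run t].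

Definition Pr (t : btree n) (E : pred {set 'I_n}) : R :=
  \sum_(x <- pivotal_output t) (if E x.2 then x.1 else 0).

End Pivotal.

(* Main.v *)
Require Import Defs.
From HB Require Import structures.
From mathcomp Require Import all_boot all_order all_algebra.
From mathcomp Require Import ring lra.
Import Order.TTheory GRing.Theory Num.Theory.
Local Open Scope ring_scope.

Module Aux.
Set Implicit Arguments. Unset Strict Implicit. Unset Printing Implicit Defensive.
Section Abs.
Variables (R : realFieldType) (I : finType).

Definition goodKF (K F : {set I} -> R) :=
  [/\ forall S, 0 <= K S, forall S, 0 <= F S,
      forall S x, K S * F (x |: S) <= K (x |: S) * F S &
      forall S x y e f, x != y -> 0 <= e -> 0 <= f ->
        (e * K S + f * F S) * (e * K (x |: (y |: S)) + f * F (x |: (y |: S)))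
        <= (e * K (x |: S) + f * F (x |: S)) * (e * K (y |: S) + f * F (y |: S))].

Lemma IU_in (x : I) (T L : {set I}) : x \in L -> (x |: T) :&: L = x |: (T :&: L).
Proof. move=> xL; apply/setP=> z; rewrite !inE; case: (z =P x) => [->|] //=; by rewrite ?xL ?(negbTE xL) ?andbF ?andbT. Qed.
Lemma DU_in (x : I) (T L : {set I}) : x \in L -> (x |: T) :\: L = T :\: L.
Proof. move=> xL; apply/setP=> z; rewrite !inE; case: (z =P x) => [->|] //=; by rewrite ?xL ?(negbTE xL) ?andbF ?andbT. Qed.
Lemma IU_out (x : I) (T L : {set I}) : x \notin L -> (x |: T) :&: L = T :&: L.
Proof. move=> xL; apply/setP=> z; rewrite !inE; case: (z =P x) => [->|] //=; by rewrite ?xL ?(negbTE xL) ?andbF ?andbT. Qed.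
Lemma DU_out (x : I) (T L : {set I}) : x \notin L -> (x |: T) :\: L = x |: (T :\: L).
Proof. move=> xL; apply/setP=> z; rewrite !inE; case: (z =P x) => [->|] //=; by rewrite ?xL ?(negbTE xL) ?andbF ?andbT. Qed.

Lemma goodKF_leaf (i : I) :
  goodKF (fun S => (S \subset [set i])%:R) (fun S => (S \subset set0)%:R).
Proof.
have h0 x S : ((x |: S) \subset (set0 : {set I})) = false.
  by apply/negbTE/negP => /subsetP /(_ x); rewrite !inE eqxx => /(_ isT).
split=> [S|S|S x|S x y e f xy e0 f0]; rewrite ?ler0n // ?h0 ?mulr0.
  by apply: mulr_ge0; rewrite ler0n.
have -> : ((x |: (y |: S)) \subset [set i]) = false.
  apply/negbTE/negP => /subsetP hs.
  have := hs x; rewrite !inE eqxx /= => /(_ isT) /eqP hx.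
  have := hs y; rewrite !inE eqxx orbT /= => /(_ isT) /eqP hy.
  by move: xy; rewrite hx hy eqxx.
rewrite mulr0 addr0 mulr0 !addr0; apply: mulr_ge0; apply: mulr_ge0 => //;
  by rewrite ler0n.
Qed.


Lemma alg_I1l (a c k0 k1 f0 f1 K G : R) : 0 <= a -> k0 * f1 <= k1 * f0 ->
  (a * k0 * G + c * f0 * K) * (f1 * G) <= (a * k1 * G + c * f1 * K) * (f0 * G).
Proof.
move=> a0 h; rewrite -subr_ge0.
have -> : (a * k1 * G + c * f1 * K) * (f0 * G) - (a * k0 * G + c * f0 * K) * (f1 * G)
  = a * (G * G) * (k1 * f0 - k0 * f1) by ring.
by apply: mulr_ge0; [apply: mulr_ge0 => //; rewrite -expr2 sqr_ge0|rewrite subr_ge0].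
Qed.

Lemma alg_I1r (a c k f K0 K1 G0 G1 : R) : 0 <= c -> K0 * G1 <= K1 * G0 ->
  (a * k * G0 + c * f * K0) * (f * G1) <= (a * k * G1 + c * f * K1) * (f * G0).
Proof.
move=> c0 h; rewrite -subr_ge0.
have -> : (a * k * G1 + c * f * K1) * (f * G0) - (a * k * G0 + c * f * K0) * (f * G1)
  = c * (f * f) * (K1 * G0 - K0 * G1) by ring.
by apply: mulr_ge0; [apply: mulr_ge0 => //; rewrite -expr2 sqr_ge0|rewrite subr_ge0].
Qed.

Lemma alg_split (e f lam k0 k1 f0 f1 K0 K1 G0 G1 : R) :
  0 <= e -> 0 <= lam -> 0 <= 1 - lam ->
  k0 * f1 <= k1 * f0 -> K0 * G1 <= K1 * G0 ->
  (e * (lam * k0 * G0 + (1 - lam) * f0 * K0) + f * (f0 * G0)) *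
  (e * (lam * k1 * G1 + (1 - lam) * f1 * K1) + f * (f1 * G1)) <=
  (e * (lam * k1 * G0 + (1 - lam) * f1 * K0) + f * (f1 * G0)) *
  (e * (lam * k0 * G1 + (1 - lam) * f0 * K1) + f * (f0 * G1)).
Proof.
move=> e0 l0 l1 hl hr; rewrite -subr_ge0.
set P := (X in 0 <= X).
have -> : P = e * e * lam * (1 - lam) * ((k0 * f1 - k1 * f0) * (K0 * G1 - K1 * G0)).
  by rewrite /P; ring.
apply: mulr_ge0; first by do 3 (apply: mulr_ge0 => //).
by apply: mulr_le0; rewrite subr_le0.
Qed.

Section Node.
Variables (L : {set I}) (Kl Fl Kr Fr : {set I} -> R) (lam : R).
Hypotheses (hl0 : 0 <= lam) (hl1 : lam <= 1) (gl : goodKF Kl Fl) (gr : goodKF Kr Fr).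

Lemma node1 : goodKF
  (fun S => lam * Kl (S :&: L) * Fr (S :\: L) + (1 - lam) * Fl (S :&: L) * Kr (S :\: L))
  (fun S => Fl (S :&: L) * Fr (S :\: L)).
Proof.
case: gl => Kl0 Fl0 I1l I2l; case: gr => Kr0 Fr0 I1r I2r.
have l1 : 0 <= 1 - lam by rewrite subr_ge0.
split.
- by move=> S; apply: addr_ge0; apply: mulr_ge0 => //; apply: mulr_ge0.
- by move=> S; apply: mulr_ge0.
- move=> S x; case: (boolP (x \in L)) => xL.
    by rewrite IU_in // DU_in //; apply: alg_I1l => //; exact: I1l.
  by rewrite IU_out // DU_out //; apply: alg_I1r => //; exact: I1r.
- move=> S x y e f xy e0 f0.
  case: (boolP (x \in L)) => xL; case: (boolP (y \in L)) => yL.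
  + rewrite !(IU_in _ xL) !(DU_in _ xL) !(IU_in _ yL) !(DU_in _ yL).
    have p1 : 0 <= e * lam * Fr (S :\: L) by do 2 (apply: mulr_ge0 => //).
    have p2 : 0 <= e * (1 - lam) * Kr (S :\: L) + f * Fr (S :\: L).
      by apply: addr_ge0; do ?(apply: mulr_ge0 => //).
    move: (@I2l (S :&: L) x y _ _ xy p1 p2).
    have E T : e * (lam * Kl T * Fr (S :\: L) + (1 - lam) * Fl T * Kr (S :\: L))
                 + f * (Fl T * Fr (S :\: L))
               = e * lam * Fr (S :\: L) * Kl T
                 + (e * (1 - lam) * Kr (S :\: L) + f * Fr (S :\: L)) * Fl T by ring.
    by rewrite !E.
  + rewrite !(IU_in _ xL) !(DU_in _ xL) !(IU_out _ yL) !(DU_out _ yL).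
    apply: alg_split => //; by [apply: I1l | apply: I1r].
  + rewrite setUCA [X in _ <= X]mulrC.
    rewrite !(IU_in _ yL) !(DU_in _ yL) !(IU_out _ xL) !(DU_out _ xL).
    apply: alg_split => //; by [apply: I1l | apply: I1r].
  + rewrite !(IU_out _ xL) !(DU_out _ xL) !(IU_out _ yL) !(DU_out _ yL).
    have p1 : 0 <= e * (1 - lam) * Fl (S :&: L) by do 2 (apply: mulr_ge0 => //).
    have p2 : 0 <= e * lam * Kl (S :&: L) + f * Fl (S :&: L).
      by apply: addr_ge0; do ?(apply: mulr_ge0 => //).
    move: (@I2r (S :\: L) x y _ _ xy p1 p2).
    have E T : e * (lam * Kl (S :&: L) * Fr T + (1 - lam) * Fl (S :&: L) * Kr T)
                 + f * (Fl (S :&: L) * Fr T)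
               = e * (1 - lam) * Fl (S :&: L) * Kr T
                 + (e * lam * Kl (S :&: L) + f * Fl (S :&: L)) * Fr T by ring.
    by rewrite !E.
Qed.
End Node.

Lemma alg2_I1l (a c k0 k1 f0 f1 K G : R) : 0 <= a -> k0 * f1 <= k1 * f0 ->
  (k0 * K) * (a * f1 * K + c * k1 * G) <= (k1 * K) * (a * f0 * K + c * k0 * G).
Proof.
move=> a0 h; rewrite -subr_ge0.
have -> : (k1 * K) * (a * f0 * K + c * k0 * G) - (k0 * K) * (a * f1 * K + c * k1 * G)
  = a * (K * K) * (k1 * f0 - k0 * f1) by ring.
by apply: mulr_ge0; [apply: mulr_ge0 => //; rewrite -expr2 sqr_ge0|rewrite subr_ge0].
Qed.

Lemma alg2_I1r (a c k f K0 K1 G0 G1 : R) : 0 <= c -> K0 * G1 <= K1 * G0 ->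
  (k * K0) * (a * f * K1 + c * k * G1) <= (k * K1) * (a * f * K0 + c * k * G0).
Proof.
move=> c0 h; rewrite -subr_ge0.
have -> : (k * K1) * (a * f * K0 + c * k * G0) - (k * K0) * (a * f * K1 + c * k * G1)
  = c * (k * k) * (K1 * G0 - K0 * G1) by ring.
by apply: mulr_ge0; [apply: mulr_ge0 => //; rewrite -expr2 sqr_ge0|rewrite subr_ge0].
Qed.

Lemma alg2_split (e f mu k0 k1 f0 f1 K0 K1 G0 G1 : R) :
  0 <= mu -> 0 <= 1 - mu ->
  k0 * f1 <= k1 * f0 -> K0 * G1 <= K1 * G0 ->
  (e * (k0 * K0) + f * (mu * f0 * K0 + (1 - mu) * k0 * G0)) *
  (e * (k1 * K1) + f * (mu * f1 * K1 + (1 - mu) * k1 * G1)) <=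
  (e * (k1 * K0) + f * (mu * f1 * K0 + (1 - mu) * k1 * G0)) *
  (e * (k0 * K1) + f * (mu * f0 * K1 + (1 - mu) * k0 * G1)).
Proof.
move=> l0 l1 hl hr; rewrite -subr_ge0.
set P := (X in 0 <= X).
have -> : P = (f * f) * mu * (1 - mu) * ((k0 * f1 - k1 * f0) * (K0 * G1 - K1 * G0)).
  by rewrite /P; ring.
apply: mulr_ge0; first by do 2 (apply: mulr_ge0 => //); rewrite -expr2 sqr_ge0.
by apply: mulr_le0; rewrite subr_le0.
Qed.

Section Node2.
Variables (L : {set I}) (Kl Fl Kr Fr : {set I} -> R) (mu : R).
Hypotheses (hl0 : 0 <= mu) (hl1 : mu <= 1) (gl : goodKF Kl Fl) (gr : goodKF Kr Fr).

Lemma node2 : goodKF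
  (fun S => Kl (S :&: L) * Kr (S :\: L))
  (fun S => mu * Fl (S :&: L) * Kr (S :\: L) + (1 - mu) * Kl (S :&: L) * Fr (S :\: L)).
Proof.
case: gl => Kl0 Fl0 I1l I2l; case: gr => Kr0 Fr0 I1r I2r.
have l1 : 0 <= 1 - mu by rewrite subr_ge0.
split.
- by move=> S; apply: mulr_ge0.
- by move=> S; apply: addr_ge0; apply: mulr_ge0 => //; apply: mulr_ge0.
- move=> S x; case: (boolP (x \in L)) => xL.
    by rewrite (IU_in _ xL) (DU_in _ xL); apply: alg2_I1l => //; exact: I1l.
  by rewrite (IU_out _ xL) (DU_out _ xL); apply: alg2_I1r => //; exact: I1r.
- move=> S x y e f xy e0 f0.
  case: (boolP (x \in L)) => xL; case: (boolP (y \in L)) => yL.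
  + rewrite !(IU_in _ xL) !(DU_in _ xL) !(IU_in _ yL) !(DU_in _ yL).
    have p1 : 0 <= e * Kr (S :\: L) + f * (1 - mu) * Fr (S :\: L).
      by apply: addr_ge0; do ?(apply: mulr_ge0 => //).
    have p2 : 0 <= f * mu * Kr (S :\: L) by do 2 (apply: mulr_ge0 => //).
    move: (@I2l (S :&: L) x y _ _ xy p1 p2).
    have E T : e * (Kl T * Kr (S :\: L)) + f * (mu * Fl T * Kr (S :\: L)
                 + (1 - mu) * Kl T * Fr (S :\: L))
               = (e * Kr (S :\: L) + f * (1 - mu) * Fr (S :\: L)) * Kl T
                 + (f * mu * Kr (S :\: L)) * Fl T by ring.
    by rewrite !E.
  + rewrite !(IU_in _ xL) !(DU_in _ xL) !(IU_out _ yL) !(DU_out _ yL).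
    apply: alg2_split => //; by [apply: I1l | apply: I1r].
  + rewrite setUCA [X in _ <= X]mulrC.
    rewrite !(IU_in _ yL) !(DU_in _ yL) !(IU_out _ xL) !(DU_out _ xL).
    apply: alg2_split => //; by [apply: I1l | apply: I1r].
  + rewrite !(IU_out _ xL) !(DU_out _ xL) !(IU_out _ yL) !(DU_out _ yL).
    have p1 : 0 <= e * Kl (S :&: L) + f * mu * Fl (S :&: L).
      by apply: addr_ge0; do ?(apply: mulr_ge0 => //).
    have p2 : 0 <= f * (1 - mu) * Kl (S :&: L) by do 2 (apply: mulr_ge0 => //).
    move: (@I2r (S :\: L) x y _ _ xy p1 p2).
    have E T : e * (Kl (S :&: L) * Kr T) + f * (mu * Fl (S :&: L) * Kr T
                 + (1 - mu) * Kl (S :&: L) * Fr T)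
               = (e * Kl (S :&: L) + f * mu * Fl (S :&: L)) * Kr T
                 + (f * (1 - mu) * Kl (S :&: L)) * Fr T by ring.
    by rewrite !E.
Qed.
End Node2.

Lemma goodKF_ext (K F K' F' : {set I} -> R) : K =1 K' -> F =1 F' -> goodKF K F -> goodKF K' F'.
Proof.
move=> eK eF [h1 h2 h3 h4]; split=> [S|S|S x|S x y e f ? ? ?]; rewrite -?eK -?eF;
  by [apply: h1|apply: h2|apply: h3|apply: h4].
Qed.

Lemma good_K (K F : {set I} -> R) : goodKF K F -> forall S x y, x != y ->
  K S * K (x |: (y |: S)) <= K (x |: S) * K (y |: S).
Proof.
move=> [_ _ _ h4] S x y xy; have := h4 S x y 1 0 xy ler01 (lexx 0).
by rewrite !mul1r !mul0r !addr0.
Qed.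

Lemma good_F (K F : {set I} -> R) : goodKF K F -> forall S x y, x != y ->
  F S * F (x |: (y |: S)) <= F (x |: S) * F (y |: S).
Proof.
move=> [_ _ _ h4] S x y xy; have := h4 S x y 0 1 xy (lexx 0) ler01.
by rewrite !mul1r !mul0r !add0r.
Qed.
End Abs.

Section Conc.
Variables (R : realFieldType) (n : nat) (q : 'I_n -> R).
Hypothesis hq : forall i, 0 <= q i <= 1.

Fixpoint pv (t : btree n) : R :=
  match t with
  | BLeaf i => q i
  | BNode l r => if pv l + pv r <= 1 then pv l + pv r else pv l + pv r - 1
  end.

Lemma pv_range t : 0 <= pv t <= 1.
Proof.
elim: t => [i|l IHl r IHr] /=; first exact: hq.
move: IHl IHr => /andP[? ?] /andP[? ?].
case: ifP => h; apply/andP; split; lra.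
Qed.

Lemma lam_range (a b : R) : 0 <= a -> 0 <= b -> 0 <= a / (a + b) <= 1.
Proof.
move=> a0 b0; have [->|s0] := eqVneq (a + b) 0; first by rewrite invr0 mulr0 lexx ler01.
have sp : 0 < a + b by rewrite lt_def s0 addr_ge0.
apply/andP; split; first by apply: divr_ge0 => //; exact: ltW.
by rewrite ler_pdivrMr // mul1r lerDl.
Qed.

Lemma mu_range (a b : R) : a <= 1 -> b <= 1 -> 0 <= (1 - a) / (2 - a - b) <= 1.
Proof.
move=> a1 b1; have [->|s0] := eqVneq (2 - a - b) 0; first by rewrite invr0 mulr0 lexx ler01.
have sp : 0 < 2 - a - b by rewrite lt_def s0 /=; lra.
apply/andP; split; first by apply: divr_ge0 => //; [lra| exact: ltW].
rewrite ler_pdivrMr // mul1r; lra.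
Qed.

Lemma mem_run_node (l r : btree n) x : x \in run q (BNode l r) ->
  exists a, exists b, exists z, [/\ a \in run q l, b \in run q r,
    z \in Defs.merge a.2 b.2 & x = (a.1 * b.1 * z.1, z.2)].
Proof.
move=> /flattenP [s /mapP [a ha ->]] /flattenP [s' /mapP [b hb ->]] /mapP [z hz ->].
by exists a, b, z.
Qed.

Definition Lt (t : btree n) : {set 'I_n} := [set z | z \in leaves t].

Lemma run_inv t x : x \in run q t ->
  [/\ 0 <= x.1, x.2.1.2 = pv t, x.2.1.1 \in Lt t & x.2.2 \subset Lt t].
Proof.
elim: t x => [i|l IHl r IHr] x.
  rewrite /= inE => /eqP -> /=; split => //; first by rewrite inE mem_seq1.
  exact: sub0set.
move=> /mem_run_node [[wa [[ia pa] Aa]] [[wb [[ib pb] Ab]] [z [ha hb hz ->]]]].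
case: (IHl _ ha) => /= wa0 hpa ia_in Aa_sub.
case: (IHr _ hb) => /= wb0 hpb ib_in Ab_sub.
move: hz; rewrite /Defs.merge /= hpa hpb.
have /andP[pl0 pl1] := pv_range l; have /andP[pr0 pr1] := pv_range r.
have sL : Lt l \subset Lt (BNode l r).
  by apply/subsetP => u; rewrite !inE /= mem_cat => ->.
have sR : Lt r \subset Lt (BNode l r).
  by apply/subsetP => u; rewrite !inE /= mem_cat orbC => ->.
have ia_in' := ia_in; have ib_in' := ib_in; rewrite inE in ia_in' ib_in'.
have iaN : ia \in Lt (BNode l r) by apply: (subsetP sL).
have ibN : ib \in Lt (BNode l r) by apply: (subsetP sR).
have AU : Aa :|: Ab \subset Lt (BNode l r).
  by rewrite subUset (subset_trans Aa_sub sL) (subset_trans Ab_sub sR).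
have /andP[lm0 lm1] := lam_range pl0 pr0.
have /andP[mu0 mu1] := mu_range pl1 pr1.
case: ifP => hs; rewrite !inE => /orP [] /eqP -> /=; split => //;
  rewrite ?subUset ?sub1set ?iaN ?ibN ?AU ?mem_cat ?ia_in' ?ib_in' ?orbT //;
  do ?(apply: mulr_ge0 => //); rewrite ?subr_ge0 //;
  try first [by apply/orP; right | by rewrite (subset_trans Aa_sub sL) (subset_trans Ab_sub sR)].
all: by move: ib_in; rewrite inE => ->; rewrite orbT.
Qed.


Definition Fs (t : btree n) (S : {set 'I_n}) : R :=
  \sum_(x <- run q t) x.1 * (S \subset x.2.2)%:R.
Definition Ks (t : btree n) (S : {set 'I_n}) : R :=
  \sum_(x <- run q t) x.1 * (S \subset x.2.1.1 |: x.2.2)%:R.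

Lemma natr_and (a b : bool) : ((a && b)%:R : R) = a%:R * b%:R.
Proof. by case: a; case: b; rewrite /= ?mul0r ?mul1r. Qed.

Lemma sub_split (S A B L : {set 'I_n}) : A \subset L -> (forall z, z \in B -> z \notin L) ->
  ((S \subset A :|: B)%:R : R) = (S :&: L \subset A)%:R * (S :\: L \subset B)%:R.
Proof.
move=> /subsetP hA hB; rewrite -natr_and.
suff -> : (S \subset A :|: B) = (S :&: L \subset A) && (S :\: L \subset B) by [].
apply/idP/andP.
  move=> /subsetP h; split; apply/subsetP => z.
  - rewrite !inE => /andP [zS zL].
    move: (h z zS); rewrite inE => /orP [] // zz.
    by move: (hB z zz); rewrite zL.
  - rewrite !inE => /andP [zL zS].
    move: (h z zS); rewrite inE => /orP [] // zz.
    by move: (hA z zz); rewrite (negbTE zL).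
move=> [/subsetP h1 /subsetP h2]; apply/subsetP => z zS; rewrite inE.
case: (boolP (z \in L)) => zL.
  by rewrite h1 // inE zL zS.
by rewrite h2 ?orbT // !inE zL zS.
Qed.

Lemma setE1 (ia : 'I_n) (Aa Ab : {set 'I_n}) : ia |: (Aa :|: Ab) = (ia |: Aa) :|: Ab.
Proof. by rewrite setUA. Qed.
Lemma setE2 (ib : 'I_n) (Aa Ab : {set 'I_n}) : ib |: (Aa :|: Ab) = Aa :|: (ib |: Ab).
Proof. by rewrite setUCA. Qed.
Lemma setE3 (ia ib : 'I_n) (Aa Ab : {set 'I_n}) :
  ia |: (ib |: (Aa :|: Ab)) = (ia |: Aa) :|: (ib |: Ab).
Proof. by rewrite (setUCA [set ib]) setUA. Qed.
Lemma setE4 (ia ib : 'I_n) (Aa Ab : {set 'I_n}) :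
  ib |: (ia |: (Aa :|: Ab)) = (ia |: Aa) :|: (ib |: Ab).
Proof. by rewrite setUCA setE3. Qed.

Section Pair.
Variables (ia ib : 'I_n) (pa pb : R) (Aa Ab S L : {set 'I_n}).
Hypotheses (iaL : ia \in L) (AaL : Aa \subset L) (ibL : ib \notin L)
  (AbL : forall z, z \in Ab -> z \notin L).
Let lam := pa / (pa + pb).
Let mu := (1 - pa) / (2 - pa - pb).

Let sA : ia |: Aa \subset L. Proof. by rewrite subUset sub1set iaL. Qed.
Let sB : forall z, z \in ib |: Ab -> z \notin L.
Proof. by move=> z; rewrite !inE => /orP [/eqP ->|/AbL]. Qed.

Lemma pairF :
  \sum_(z <- Defs.merge (ia, pa, Aa) (ib, pb, Ab)) z.1 * (S \subset z.2.2)%:R =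
  if pa + pb <= 1 then (S :&: L \subset Aa)%:R * (S :\: L \subset Ab)%:R
  else mu * ((S :&: L \subset Aa)%:R * (S :\: L \subset ib |: Ab)%:R)
     + (1 - mu) * ((S :&: L \subset ia |: Aa)%:R * (S :\: L \subset Ab)%:R).
Proof.
rewrite /Defs.merge /=; case: ifP => _; rewrite !big_cons big_nil /= addr0.
  by rewrite !(sub_split _ AaL AbL) /lam; ring.
by rewrite (setE2 ib) (setE1 ia) (sub_split _ AaL sB) (sub_split _ sA AbL).
Qed.

Lemma pairK :
  \sum_(z <- Defs.merge (ia, pa, Aa) (ib, pb, Ab)) z.1 * (S \subset z.2.1.1 |: z.2.2)%:R =
  if pa + pb <= 1 then
    lam * ((S :&: L \subset ia |: Aa)%:R * (S :\: L \subset Ab)%:R)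
     + (1 - lam) * ((S :&: L \subset Aa)%:R * (S :\: L \subset ib |: Ab)%:R)
  else (S :&: L \subset ia |: Aa)%:R * (S :\: L \subset ib |: Ab)%:R.
Proof.
rewrite /Defs.merge /=; case: ifP => _; rewrite !big_cons big_nil /= addr0.
  by rewrite (setE2 ib) (setE1 ia) (sub_split _ AaL sB) (sub_split _ sA AbL).
by rewrite setE3 setE4 !(sub_split _ sA sB) /mu; ring.
Qed.
End Pair.


Lemma sum_fact (T1 T2 : Type) (X : seq T1) (Y : seq T2) (a : T1 -> R) (b : T2 -> R) :
  (\sum_(x <- X) a x) * (\sum_(y <- Y) b y) = \sum_(x <- X) \sum_(y <- Y) (a x * b y).
Proof. by rewrite big_distrl; apply: eq_bigr => x _; rewrite big_distrr. Qed.

Lemma sum_fact2 (T1 T2 : Type) (X : seq T1) (Y : seq T2) (a1 a2 : T1 -> R)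
    (b1 b2 : T2 -> R) (c1 c2 : R) :
  c1 * (\sum_(x <- X) a1 x) * (\sum_(y <- Y) b1 y)
  + c2 * (\sum_(x <- X) a2 x) * (\sum_(y <- Y) b2 y)
  = \sum_(x <- X) \sum_(y <- Y) (c1 * (a1 x * b1 y) + c2 * (a2 x * b2 y)).
Proof.
rewrite -!mulrA !sum_fact !mulr_sumr -big_split; apply: eq_bigr => x _.
by rewrite !mulr_sumr -big_split.
Qed.

Lemma Fs_expand l r S : Fs (BNode l r) S = \sum_(x <- run q l) \sum_(y <- run q r)
  x.1 * y.1 * \sum_(z <- Defs.merge x.2 y.2) z.1 * (S \subset z.2.2)%:R.
Proof.
rewrite /Fs /= big_flatten /= big_map; apply: eq_bigr => x _.
rewrite big_flatten big_map; apply: eq_bigr => y _.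
by rewrite big_map mulr_sumr; apply: eq_bigr => z _ /=; rewrite mulrA.
Qed.

Lemma Ks_expand l r S : Ks (BNode l r) S = \sum_(x <- run q l) \sum_(y <- run q r)
  x.1 * y.1 * \sum_(z <- Defs.merge x.2 y.2) z.1 * (S \subset z.2.1.1 |: z.2.2)%:R.
Proof.
rewrite /Ks /= big_flatten /= big_map; apply: eq_bigr => x _.
rewrite big_flatten big_map; apply: eq_bigr => y _.
by rewrite big_map mulr_sumr; apply: eq_bigr => z _ /=; rewrite mulrA.
Qed.

Lemma node_good l r : uniq (leaves (BNode l r)) ->
  goodKF (Ks l) (Fs l) -> goodKF (Ks r) (Fs r) -> goodKF (Ks (BNode l r)) (Fs (BNode l r)).
Proof.
rewrite /= cat_uniq => /and3P [_ hdis _] gl gr.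
set L := Lt l.
have outL u : u \in Lt r -> u \notin L.
  rewrite !inE => ur; apply/negP => ul; move/hasPn: hdis => /(_ u ur).
  by rewrite ul.
have hx x : x \in run q l -> [/\ x.2.1.2 = pv l, x.2.1.1 \in L & x.2.2 \subset L].
  by case/run_inv.
have hy y : y \in run q r -> [/\ y.2.1.2 = pv r, y.2.1.1 \notin L &
     forall z, z \in y.2.2 -> z \notin L].
  case/run_inv => _ h1 h2 /subsetP h3; split => //; first exact: outL.
  by move=> z /h3; exact: outL.
have /andP[pl0 pl1] := pv_range l; have /andP[pr0 pr1] := pv_range r.
have /andP[lm0 lm1] := lam_range pl0 pr0.
have /andP[mu0 mu1] := mu_range pl1 pr1.
case hs : (pv l + pv r <= 1).
- apply: (goodKF_ext _ _ (node1 L lm0 lm1 gl gr)) => S.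
    rewrite Ks_expand /Ks /Fs sum_fact2.
    apply: eq_big_seq => -[wx [[ia pa] Aa]] /hx [/= hpa iaL AaL].
    apply: eq_big_seq => -[wy [[ib pb] Ab]] /hy [/= hpb ibL AbL].
    rewrite /= (@pairK ia ib pa pb Aa Ab S L iaL AaL ibL AbL) hpa hpb hs /=; ring.
  rewrite Fs_expand /Fs sum_fact.
  apply: eq_big_seq => -[wx [[ia pa] Aa]] /hx [/= hpa iaL AaL].
  apply: eq_big_seq => -[wy [[ib pb] Ab]] /hy [/= hpb ibL AbL].
  rewrite /= (@pairF ia ib pa pb Aa Ab S L iaL AaL ibL AbL) hpa hpb hs /=; ring.
- apply: (goodKF_ext _ _ (node2 L mu0 mu1 gl gr)) => S.
    rewrite Ks_expand /Ks /Fs sum_fact.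
    apply: eq_big_seq => -[wx [[ia pa] Aa]] /hx [/= hpa iaL AaL].
    apply: eq_big_seq => -[wy [[ib pb] Ab]] /hy [/= hpb ibL AbL].
    rewrite /= (@pairK ia ib pa pb Aa Ab S L iaL AaL ibL AbL) hpa hpb hs /=; ring.
  rewrite Fs_expand /Ks /Fs sum_fact2.
  apply: eq_big_seq => -[wx [[ia pa] Aa]] /hx [/= hpa iaL AaL].
  apply: eq_big_seq => -[wy [[ib pb] Ab]] /hy [/= hpb ibL AbL].
  rewrite /= (@pairF ia ib pa pb Aa Ab S L iaL AaL ibL AbL) hpa hpb hs /=; ring.
Qed.

Lemma run_good t : uniq (leaves t) -> goodKF (Ks t) (Fs t).
Proof.
elim: t => [i|l IHl r IHr] hu.
  apply: (goodKF_ext _ _ (goodKF_leaf R i)) => S;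
    by rewrite /Ks /Fs /= big_cons big_nil /= addr0 mul1r ?setU0.
have := hu; rewrite /= cat_uniq => /and3P [ul _ ur].
exact: node_good hu (IHl ul) (IHr ur).
Qed.

Lemma Pr_sub t (T : {set 'I_n}) :
  Pr q t (fun X => T \subset X) = if pv t == 1 then Ks t T else Fs t T.
Proof.
rewrite /Pr /pivotal_output big_map /Ks /Fs.
case: ifP => h; apply: eq_big_seq => -[w [[i p] A]] /run_inv [_ /= hp _ _];
  rewrite hp h; by case: ifP; rewrite ?mulr1 ?mulr0.
Qed.

Lemma Pr_ext t (E E' : pred {set 'I_n}) : E =1 E' -> Pr q t E = Pr q t E'.
Proof. by move=> h; rewrite /Pr; apply: eq_bigr => x _; rewrite h. Qed.
End Conc.

End Aux.
Import Aux.

Theorem corollaryE3 (R : realFieldType) (n : nat) (t : btree n) (q : 'I_n -> R)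
  (ht : leaves_are_index_set t)
  (hq : forall i, 0 <= q i <= 1)
  (hsum : exists k : nat, \sum_(i < n) q i = k%:R)
  (S : {set 'I_n}) (i j : 'I_n)
  (hS : 0 < Pr q t (fun X => S \subset X))
  (hiS : i \notin S) (hjS : j \notin S) (hij : i != j) :
  let PS := Pr q t (fun X => S \subset X) in
  (Pr q t (fun X => (i \in X) && (S \subset X)) / PS) *
  (Pr q t (fun X => (j \in X) && (S \subset X)) / PS)
  >= Pr q t (fun X => [&& i \in X, j \in X & S \subset X]) / PS.
Proof.
cbv zeta.
set PS := Pr q t (fun X => S \subset X).
have hu : uniq (leaves t) by rewrite (perm_uniq ht) enum_uniq.
have g := run_good hq hu.
have key : PS * Pr q t (fun X => [&& i \in X, j \in X & S \subset X]) <=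
    Pr q t (fun X => (i \in X) && (S \subset X)) * Pr q t (fun X => (j \in X) && (S \subset X)).
  rewrite /PS (@Pr_ext _ _ _ t (fun X => [&& i \in X, j \in X & S \subset X])
               (fun X => i |: (j |: S) \subset X)); last first.
    by move=> X; rewrite !subUset !sub1set.
  rewrite (@Pr_ext _ _ _ t (fun X => (i \in X) && (S \subset X)) (fun X => i |: S \subset X));
    last by move=> X; rewrite subUset sub1set.
  rewrite (@Pr_ext _ _ _ t (fun X => (j \in X) && (S \subset X)) (fun X => j |: S \subset X));
    last by move=> X; rewrite subUset sub1set.
  rewrite !(Pr_sub hq); case: ifP => _; [exact: good_K g S i j hij | exact: good_F g S i j hij].
move: key hS; rewrite -/PS.
set a := Pr q t _; set b := Pr q t _; set c := Pr q t _ => key hS.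
rewrite -subr_ge0.
have -> : b / PS * (c / PS) - a / PS = (b * c - PS * a) / (PS * PS).
  by field; rewrite lt0r_neq0.
by apply: divr_ge0; [rewrite subr_ge0 | apply: mulr_ge0; apply: ltW].
Qed.
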